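(* Let $\mathcal{P}$ be a collection of cells. Let $a=(i,j)$, $b=(k,l)$ and $\delta=(m,n)$ with $i<m<k$ and $j<n<l$, and suppose $[a,b]$ is an inner interval of $\mathcal{P}$ (hence so is $[\alpha,\beta]$ with $\alpha=(i,n)$, $\beta=(m,l)$, whose upper left corner $\gamma$ equals the upper left corner $c=(i,l)$ of $[a,b]$). Put $d=(k,j)$, $h=(m,j)$, $r=(k,n)$. Let $<^{\mathsf{P}}$ be a $\mathsf{P}$-order on $V(\mathcal{P})$ and suppose that the leading monomials of $f_{a,b}$ and $f_{\alpha,\beta}$ with respect to $<^{\mathsf{P}}_{\mathrm{lex}}$ are not coprime. Then $S(f_{a,b},f_{\alpha,\beta})$ reduces to $0$ modulo $\mathcal{G}$ with respect to $<^{\mathsf{P}}_{\mathrm{lex}}$ if and only if one of the following holds: (1) $x_dx_\alpha x_\beta<^{\mathsf{P}}_{\mathrm{lex}}x_\delta x_ax_b$, and ($h,\alpha<^{\mathsf{P}}a$ or $h,\alpha<^{\mathsf{P}}\delta$); (2) $x_dx_\alpha x_\beta<^{\mathsf{P}}_{\mathrm{lex}}x_\delta x_ax_b$, and ($r,\beta<^{\mathsf{P}}\delta$ or $r,\beta<^{\mathsf{P}}b$); (3) $x_\delta x_ax_b<^{\mathsf{P}}_{\mathrm{lex}}x_dx_\alpha x_\beta$, and ($r,a<^{\mathsf{P}}\alpha$ or $r,a<^{\mathsf{P}}d$); (4) $x_\delta x_ax_b<^{\mathsf{P}}_{\mathrm{lex}}x_dx_\alpha x_\beta$, and ($h,b<^{\mathsf{P}}d$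 or $h,b<^{\mathsf{P}}\beta$).
   Context: For $a=(i,j), b=(k,l)\in\mathbb{Z}^2$ with $a\le b$ componentwise, the interval $[a,b]=\{(m,n)\in\mathbb{Z}^2: i\le m\le k,\ j\le n\le l\}$; it is proper if $i<k$ and $j<l$, in which case $a,b$ are its diagonal corners and $(i,l)$ (upper left), $(k,j)$ (lower right) its anti-diagonal corners. A cell is a proper interval $[v,v+(1,1)]$; its vertices are its four corners. A collection of cells $\mathcal{P}$ is a nonempty finite set of cells; $V(\mathcal{P})$ is the set of all vertices of its cells. A proper interval $[a,b]$ is an inner interval of $\mathcal{P}$ if every cell $[v,v+(1,1)]\subseteq[a,b]$ belongs to $\mathcal{P}$. Let $K$ be a field and $S=K[x_v: v\in V(\mathcal{P})]$. For an inner interval $[a,b]$ with upper left corner $c$ and lower right corner $d$, put $f_{a,b}=x_ax_b-x_cx_d$; $\mathcal{G}$ is the set of all such inner 2-minors of $\mathcal{P}$. A $\mathsf{P}$-order is a total order $<^{\mathsf{P}}$ on $V(\mathcal{P})$; $<^{\mathsf{P}}_{\mathrm{lex}}$ is the lexicographic monomial order on $S$ with $x_u<x_v\iff u<^{\mathsf{P}}v$. For vertices $u,v,w$, ''$u,v<^{\mathsf{P}}w$'' means $u<^{\mathsf{P}}w$ and $v<^{\mathsf{P}}w$. *)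

(* Defs.v *)
From HB Require Import structures.
From mathcomp Require Import all_boot all_algebra finmap.
From mathcomp.multinomials Require Import monalg.

Set Implicit Arguments.
Unset Strict Implicit.
Unset Printing Implicit Defensive.

Import GRing.Theory.
Local Open Scope ring_scope.


Definition vertex := (int * int)%type.

(* A cell [v, v+(1,1)] is represented by its lower-left corner v;
   a collection of cells is a finite (nonempty) set of such corners. *)
Definition cell_vertices (v : vertex) : seq vertex :=
  [:: v; (v.1 + 1, v.2); (v.1, v.2 + 1); (v.1 + 1, v.2 + 1)].

Definition VP (P : {fset vertex}) : seq vertex :=
  flatten [seq cell_vertices v | v <- enum_fset P].

Definition inner_interval (P : {fset vertex}) (a b : vertex) : Prop :=
  [/\ a.1 < b.1, a.2 < b.2 &
      forall v : vertex, a.1 <= v.1 -> v.1 + 1 <= b.1 ->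
                         a.2 <= v.2 -> v.2 + 1 <= b.2 -> v \in P].

(* A P-order: a strict total order on V(P) (given as a relation on Z^2,
   only its restriction to V(P) matters). *)
Definition P_order (P : {fset vertex}) (ltP : rel vertex) : Prop :=
  [/\ forall u, u \in VP P -> ~~ ltP u u,
      forall u v w, u \in VP P -> v \in VP P -> w \in VP P ->
                    ltP u v -> ltP v w -> ltP u w &
      forall u v, u \in VP P -> v \in VP P -> u != v -> ltP u v || ltP v u].

(* Monomials and polynomials in the variables x_v, v in Z^2;
   the ring S consists of the polynomials using only variables in V(P). *)
Notation monom := (cmonom vertex).
Definition polyS (K : fieldType) := {malg K[monom]}.

Definition var (K : fieldType) (v : vertex) : polyS K := << ucm v >>.

Definition in_S (P : {fset vertex}) (K : fieldType) (f : polyS K) : Prop :=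
  forall m, m \in msupp f -> forall w, (m w != 0)%N -> w \in VP P.

Definition lex_lt (P : {fset vertex}) (ltP : rel vertex) (m1 m2 : monom) : bool :=
  has (fun v => (m1 v < m2 v)%N &&
                all (fun w => ltP v w ==> (m1 w == m2 w)) (VP P)) (VP P).

(* leading monomial in(f) (the largest monomial of the support; 1 if f = 0) *)
Definition lead_mon (P : {fset vertex}) (ltP : rel vertex) (K : fieldType)
    (f : polyS K) : monom :=
  odflt (@onecm vertex)
    (omap val [pick m : msupp f |
       all (fun m' => (m' == val m) || lex_lt P ltP m' (val m)) (msupp f)]).

Definition lead_coef (P : {fset vertex}) (ltP : rel vertex) (K : fieldType)
    (f : polyS K) : K := f@_(lead_mon P ltP f).

Definition lcm_mon (u w : monom) : monom :=
  [cmonom maxn (u i) (w i) | i in (finsupp u `|` finsupp w)%fset]%M.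

Definition coprime_mon (u w : monom) : Prop :=
  forall v : vertex, u v = 0%N \/ w v = 0%N.

Definition spoly (P : {fset vertex}) (ltP : rel vertex) (K : fieldType)
    (f g : polyS K) : polyS K :=
  let u := lead_mon P ltP f in
  let w := lead_mon P ltP g in
  let l := lcm_mon u w in
  (lead_coef P ltP f)^-1 *: (<< divcm l u >> * f)
  - (lead_coef P ltP g)^-1 *: (<< divcm l w >> * g).

(* f_{a,b} = x_a x_b - x_c x_d, c = upper left, d = lower right corner *)
Definition minor2 (K : fieldType) (a b : vertex) : polyS K :=
  var K a * var K b - var K (a.1, b.2) * var K (b.1, a.2).

Definition in_G (P : {fset vertex}) (K : fieldType) (g : polyS K) : Prop :=
  exists a b, inner_interval P a b /\ g = minor2 K a b.

(* f reduces to 0 modulo G (Herzog-Hibi): f has a standard expression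
   f = sum_i h_i g_i, g_i in G, h_i in S, with in(h_i g_i) <= in(f)
   whenever h_i g_i <> 0, and remainder 0. *)
Definition reduces_to_zero (P : {fset vertex}) (ltP : rel vertex)
    (K : fieldType) (f : polyS K) : Prop :=
  exists (n : nat) (h g : 'I_n -> polyS K),
    [/\ forall i, in_G P (g i),
        forall i, in_S P (h i),
        f = \sum_(i < n) h i * g i &
        forall i, h i * g i != 0 ->
          (lead_mon P ltP (h i * g i) == lead_mon P ltP f)
          || lex_lt P ltP (lead_mon P ltP (h i * g i)) (lead_mon P ltP f)].

(* Main.v *)
Require Import Defs.
From HB Require Import structures.
From mathcomp Require Import all_boot all_algebra finmap.
From mathcomp.multinomials Require Import monalg.
From mathcomp Require Import ring zify.
Set Implicit Arguments.
Unset Strict Implicit.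
Unset Printing Implicit Defensive.
Import GRing.Theory.
Local Open Scope ring_scope.

Local Open Scope fset_scope.

Definition sok (P : {fset vertex}) (m : monom) := forall w, (m w != 0)%N -> w \in VP P.

Lemma lex_intro P (ltP : rel vertex) (m1 m2 : monom) v : v \in VP P -> (m1 v < m2 v)%N ->
  (forall w, w \in VP P -> ltP v w -> m1 w = m2 w) -> lex_lt P (ltP : rel vertex) m1 m2.
Proof.
move=> Hv Hlt Hw; apply/hasP; exists v => //; rewrite Hlt /=.
by apply/allP => w Hw'; apply/implyP => /(Hw w Hw') ->.
Qed.

Lemma lex_elim P (ltP : rel vertex) (m1 m2 : monom) : lex_lt P (ltP : rel vertex) m1 m2 ->
  exists v, [/\ v \in VP P, (m1 v < m2 v)%N &
   forall w, w \in VP P -> ltP v w -> m1 w = m2 w].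
Proof.
case/hasP => v Hv /andP[Hlt /allP Ha]; exists v; split => // w Hw Hvw.
by move: (Ha w Hw); rewrite Hvw => /eqP.
Qed.

Lemma lex_irr P (ltP : rel vertex) m : ~~ lex_lt P (ltP : rel vertex) m m.
Proof. by apply/negP => /lex_elim [v [_ /[!ltnn]]]. Qed.

Lemma lex_asym P (ltP : rel vertex) m1 m2 : P_order P (ltP : rel vertex) -> lex_lt P (ltP : rel vertex) m1 m2 -> ~~ lex_lt P (ltP : rel vertex) m2 m1.
Proof.
case=> Hirr Htr Htot /lex_elim [v [Hv H1 H2]]; apply/negP => /lex_elim [u [Hu H3 H4]].
have [Euv|Huv] := eqVneq v u; first by subst u; move: H1; rewrite ltnNge ltnW.
case/orP: (Htot _ _ Hv Hu Huv) => Hl.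
  by move: H3; rewrite (H2 _ Hu Hl) ltnn.
by move: H1; rewrite (H4 _ Hv Hl) ltnn.
Qed.

Lemma lex_trans P (ltP : rel vertex) m1 m2 m3 : P_order P (ltP : rel vertex) -> lex_lt P (ltP : rel vertex) m1 m2 ->
  lex_lt P (ltP : rel vertex) m2 m3 -> lex_lt P (ltP : rel vertex) m1 m3.
Proof.
case=> Hirr Htr Htot /lex_elim [v [Hv H1 H2]] /lex_elim [u [Hu H3 H4]].
have [Euv|Huv] := eqVneq v u.
  subst u; apply: (lex_intro Hv); first exact: ltn_trans H1 H3.
  by move=> w Hw Hl; rewrite H2 // H4.
case/orP: (Htot _ _ Hv Hu Huv) => Hl.
  apply: (lex_intro Hu); first by rewrite H2.
  by move=> w Hw Hl'; rewrite H2 ?H4 //; exact: Htr Hl Hl'.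
apply: (lex_intro Hv); first by rewrite -H4.
by move=> w Hw Hl'; rewrite H2 ?H4 //; exact: Htr Hl Hl'.
Qed.

Lemma lex_mulr P (ltP : rel vertex) m1 m2 w : lex_lt P (ltP : rel vertex) m1 m2 -> lex_lt P (ltP : rel vertex) (mulcm m1 w) (mulcm m2 w).
Proof.
move=> /lex_elim [v [Hv H1 H2]]; apply: (lex_intro Hv); first by rewrite !mulcmE ltn_add2r.
by move=> u Hu Hl; rewrite !mulcmE H2.
Qed.

Lemma lex_mull P (ltP : rel vertex) m1 m2 w : lex_lt P (ltP : rel vertex) m1 m2 -> lex_lt P (ltP : rel vertex) (mulcm w m1) (mulcm w m2).
Proof. by rewrite ![mulcm w _]mulcmC; apply: lex_mulr. Qed.

Lemma max_in P (ltP : rel vertex) (s : seq vertex) : P_order P (ltP : rel vertex) -> {subset s <= VP P} -> s != [::] ->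
  exists2 v, v \in s & forall w, w \in s -> ~~ ltP v w.
Proof.
case=> Hirr Htr Htot; elim: s => // x t IH Hs _.
have Hx : x \in VP P by apply: Hs; rewrite inE eqxx.
have Ht : {subset t <= VP P} by move=> y Hy; apply: Hs; rewrite inE Hy orbT.
case: t IH Ht Hs => [|y t] IH Ht Hs.
  by exists x; rewrite ?inE // => w; rewrite inE => /eqP ->; apply: Hirr.
case: (IH Ht isT) => v Hv Hmax.
have HvV := Ht _ Hv.
case Hxv: (ltP x v).
  exists v; first by rewrite inE Hv orbT.
  move=> w; rewrite inE => /orP[/eqP ->|Hw]; last exact: Hmax.
  apply/negP => Hvx; by move: (Hirr _ Hx); rewrite (Htr _ _ _ Hx HvV Hx Hxv Hvx).
exists x; first by rewrite inE eqxx.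
move=> w; rewrite inE => /orP[/eqP ->|Hw]; first exact: Hirr.
apply/negP => Hxw; have HwV := Ht _ Hw.
have [Ewv|Hwv] := eqVneq w v; first by subst; rewrite Hxw in Hxv.
case/orP: (Htot _ _ HwV HvV Hwv) => Hl; last by move: (Hmax _ Hw); rewrite Hl.
by rewrite (Htr _ _ _ Hx HwV HvV Hxw Hl) in Hxv.
Qed.

Lemma lex_total P (ltP : rel vertex) m1 m2 : P_order P ltP -> sok P m1 -> sok P m2 -> m1 != m2 ->
  lex_lt P ltP m1 m2 || lex_lt P ltP m2 m1.
Proof.
move=> HP S1 S2 Hne.
pose s := [seq w <- VP P | m1 w != m2 w].
have Hs : {subset s <= VP P} by move=> w; rewrite mem_filter => /andP[].
have Hsn : s != [::].
  apply/negP => /eqP Es; move/negP: Hne; apply; apply/cmP => w.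
  case Hw: (w \in VP P).
    apply/eqP; apply/negPn/negP => Hne'.
    have : w \in s by rewrite mem_filter Hne' Hw.
    by rewrite Es.
  have E1 : m1 w = 0%N by apply/eqP; apply/negPn/negP => /S1; rewrite Hw.
  have E2 : m2 w = 0%N by apply/eqP; apply/negPn/negP => /S2; rewrite Hw.
  by rewrite E1 E2.
case: (max_in HP Hs Hsn) => v Hv Hmax.
move: Hv; rewrite mem_filter => /andP[Hne' HvV].
have Heq : forall w, w \in VP P -> ltP v w -> m1 w = m2 w.
  move=> w Hw Hl; apply/eqP; apply/negPn/negP => Hn.
  have : w \in s by rewrite mem_filter Hn Hw.
  by move/Hmax; rewrite Hl.
case: (ltngtP (m1 v) (m2 v)) => H.
- by rewrite (lex_intro HvV H Heq).
- by rewrite (lex_intro HvV H) ?orbT // => w Hw Hl; rewrite Heq.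
- by rewrite H eqxx in Hne'.
Qed.

Definition is_lead P (ltP : rel vertex) (K : fieldType) (f : polyS K) (m : monom) :=
  m \in msupp f /\ forall m', m' \in msupp f -> (m' == m) || lex_lt P ltP m' m.

Lemma max_mon P (ltP : rel vertex) (s : seq monom) : P_order P ltP ->
  (forall m, m \in s -> sok P m) -> s != [::] ->
  exists2 m, m \in s & forall m', m' \in s -> (m' == m) || lex_lt P ltP m' m.
Proof.
move=> HP; elim: s => // x t IH Hs _.
have Hx : sok P x by apply: Hs; rewrite inE eqxx.
have Ht : forall m, m \in t -> sok P m by move=> y Hy; apply: Hs; rewrite inE Hy orbT.
case: t IH Ht Hs => [|y t] IH Ht Hs.
  by exists x; rewrite ?inE // => w; rewrite inE => ->.
case: (IH Ht isT) => v Hv Hmax.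
have [Exv|Hxv] := eqVneq x v.
  subst x; exists v; first by rewrite inE eqxx.
  by move=> w; rewrite inE => /orP[->|]; [|exact: Hmax].
case/orP: (lex_total HP Hx (Ht _ Hv) Hxv) => Hl.
  exists v; first by rewrite inE Hv orbT.
  by move=> w; rewrite inE => /orP[/eqP ->|Hw]; [rewrite Hl orbT| exact: Hmax].
exists x; first by rewrite inE eqxx.
move=> w; rewrite inE => /orP[->//|Hw].
case/orP: (Hmax _ Hw) => [/eqP ->|Hl']; first by rewrite Hl orbT.
by rewrite (lex_trans HP Hl' Hl) orbT.
Qed.

Lemma lead_eq P (ltP : rel vertex) K (f : polyS K) m : P_order P ltP ->
  is_lead P ltP f m -> lead_mon P ltP f = m.
Proof.
move=> HP [Hm Hmax]; rewrite /lead_mon; case: pickP => [x Hx|Hn] /=.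
  have Hxin : fsval x \in msupp f by apply: fsvalP.
  case/orP: (Hmax _ Hxin) => [/eqP //|Hl].
  move/allP: Hx => /(_ m Hm) /orP[/eqP //|Hl'].
  by move: (lex_asym HP Hl); rewrite Hl'.
move: (Hn [` Hm]) => /= /negP; case; apply/allP => m' Hm'; exact: Hmax.
Qed.

Lemma lead_is P (ltP : rel vertex) K (f : polyS K) : P_order P ltP -> f != 0 ->
  (forall m, m \in msupp f -> sok P m) -> is_lead P ltP f (lead_mon P ltP f).
Proof.
move=> HP Hf Hs.
have Hne : (msupp f : seq monom) != [::].
  apply/eqP => E; move/negP: Hf; apply; rewrite -msupp_eq0; apply/eqP/fsetP => x.
  by rewrite in_fset0; apply/negbTE/negP; rewrite -[x \in msupp f]/(x \in (msupp f : seq monom)) E.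
case: (max_mon HP Hs Hne) => m Hm Hmax.
by rewrite (lead_eq (m := m) HP) //; split.
Qed.

Lemma sok_mul P m1 m2 : sok P m1 -> sok P m2 -> sok P (mulcm m1 m2).
Proof.
move=> S1 S2 w; rewrite mulcmE; case E: (m1 w == 0)%N.
  by move/eqP: E => ->; apply: S2.
by move=> _; apply: S1; rewrite E.
Qed.

Lemma lead_mul P (ltP : rel vertex) K (h g : polyS K) : P_order P ltP -> h != 0 -> g != 0 ->
  (forall m, m \in msupp h -> sok P m) -> (forall m, m \in msupp g -> sok P m) ->
  is_lead P ltP (h * g) (mulcm (lead_mon P ltP h) (lead_mon P ltP g)).
Proof.
move=> HP Hh Hg Sh Sg.
case: (lead_is HP Hh Sh) => Hu Hmu; case: (lead_is HP Hg Sg) => Hv Hmv.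
set u0 := lead_mon P ltP h in Hu Hmu *; set v0 := lead_mon P ltP g in Hv Hmv *.
have Hle : forall k1 k2, k1 \in msupp h -> k2 \in msupp g ->
   ((k1 == u0) && (k2 == v0)) || lex_lt P ltP (mulcm k1 k2) (mulcm u0 v0).
  move=> k1 k2 H1 H2.
  case/orP: (Hmu _ H1) => [/eqP E1|L1]; case/orP: (Hmv _ H2) => [/eqP E2|L2].
  - by rewrite E1 E2 !eqxx.
  - by rewrite E1 lex_mull ?orbT.
  - by rewrite E2 lex_mulr ?orbT.
  - by rewrite (lex_trans HP (lex_mulr k2 L1) (lex_mull u0 L2)) orbT.
split.
  rewrite -mcoeff_neq0 mcoeffMl (bigD1_seq u0) ?fset_uniq //= (bigD1_seq v0) ?fset_uniq //=.
  rewrite eqxx mulr1n big1_seq ?addr0; last first.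
    move=> k2 /andP[Hk2 H2]; case: eqP; rewrite ?mulr0n // => E.
    case/orP: (Hle _ _ Hu H2); first by rewrite eqxx (negbTE Hk2).
    by have E' : mulcm u0 k2 = mulcm u0 v0 := E; rewrite E' (negbTE (lex_irr _ _ _)).
  rewrite big1_seq ?addr0; last first.
    move=> k1 /andP[Hk1 H1]; rewrite big1_seq // => k2 H2.
    case: eqP; rewrite ?mulr0n // => E.
    case/orP: (Hle _ _ H1 (andP H2).2); first by rewrite (negbTE Hk1).
    by have E' : mulcm k1 k2 = mulcm u0 v0 := E; rewrite E' (negbTE (lex_irr _ _ _)).
  by rewrite mulf_neq0 // mcoeff_neq0.
move=> m /msuppM_le [k1 [k2 [H1 H2 ->]]].
case/orP: (Hle _ _ H1 H2) => [/andP[/eqP -> /eqP ->]|L]; first by rewrite eqxx.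
by rewrite L orbT.
Qed.

Definition mm (p q : vertex) : monom := mulcm (ucm p) (ucm q).
Definition mon K (p : monom) : polyS K := << p >>.

Lemma coefU K (p m : monom) : (mon K p)@_m = (p == m)%:R.
Proof. exact: mcoeffU1. Qed.

Lemma varM K p q : var K p * var K q = mon K (mm p q).
Proof. by rewrite /var malgM_def fgmulUU mulr1. Qed.

Lemma minor2E K a b : minor2 K a b = mon K (mm a b) - mon K (mm (a.1, b.2) (b.1, a.2)).
Proof. by rewrite /minor2; congr (_ - _); exact: varM. Qed.

Lemma coef2 K (p q m : monom) : (mon K p - mon K q)@_m = (p == m)%:R - (q == m)%:R.
Proof. rewrite mcoeffB; erewrite !coefU; done. Qed.

Lemma supp2 K (p q m : monom) : m \in msupp (mon K p - mon K q) -> m = p \/ m = q.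
Proof.
rewrite -mcoeff_neq0 coef2.
case: (eqVneq p m) => [->|Hp]; first by left.
case: (eqVneq q m) => [->|Hq]; first by right.
by rewrite subrr eqxx.
Qed.

Lemma supp2p K (p q : monom) : p != q -> p \in msupp (mon K p - mon K q).
Proof. by move=> H; rewrite -mcoeff_neq0 coef2 eqxx (eq_sym q p) (negbTE H) subr0 oner_eq0. Qed.

Lemma supp2q K (p q : monom) : p != q -> q \in msupp (mon K p - mon K q).
Proof. by move=> H; rewrite -mcoeff_neq0 coef2 eqxx (negbTE H) sub0r oppr_eq0 oner_eq0. Qed.

Lemma mmE p q w : mm p q w = ((p == w) + (q == w))%N.
Proof. by rewrite /mm mulcmE !ucmE. Qed.

Lemma mm_neq p q r s : p != r -> p != s -> mm p q != mm r s.
Proof.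
move=> H1 H2; apply/negP => /eqP /(congr1 (fun m : monom => m p)).
rewrite !mmE eqxx (eq_sym r p) (eq_sym s p) (negbTE H1) (negbTE H2).
by case: (q == p).
Qed.

Lemma sok_mm P p q : p \in VP P -> q \in VP P -> sok P (mm p q).
Proof.
move=> Hp Hq w; rewrite mmE; case: (eqVneq p w) => [<-//|_].
by case: (eqVneq q w) => [<-//|].
Qed.

Lemma sok_u P p : p \in VP P -> sok P (ucm p).
Proof. by move=> Hp w; rewrite ucmE; case: (eqVneq p w) => [<-//|]. Qed.
Lemma inV P a b (x : vertex) : inner_interval P a b -> a.1 <= x.1 <= b.1 ->
  a.2 <= x.2 <= b.2 -> x \in VP P.
Proof.
case: a b x => [a1 a2] [b1 b2] [x1 x2] [/= H1 H2 HI] /andP[Hx1 Hx1'] /andP[Hx2 Hx2'].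
pose v : vertex := (if x1 == b1 then x1 - 1 else x1, if x2 == b2 then x2 - 1 else x2).
have Hv : v \in P.
  apply: HI; rewrite /v /=; case: (eqVneq x1 b1) => E1; case: (eqVneq x2 b2) => E2; lia.
apply/flatten_mapP; exists v => //.
rewrite /cell_vertices /v /= !inE !xpair_eqE.
case: (eqVneq x1 b1) => E1; case: (eqVneq x2 b2) => E2; lia.
Qed.

Lemma lex2_fwd P (ltP : rel vertex) p q r s : P_order P ltP ->
  uniq [:: p; q; r; s] -> p \in VP P -> q \in VP P -> r \in VP P -> s \in VP P ->
  lex_lt P ltP (mm r s) (mm p q) -> (ltP r p && ltP s p) || (ltP r q && ltP s q).
Proof.
move=> [Hirr Htr Htot] /= Hu Hp Hq Hr Hs /lex_elim [v [Hv Hlt Heq]].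
move: Hu; rewrite !in_cons !in_nil !orbF !negb_or -!andbA => /and5P[Hpq Hpr Hps Hqr /and3P[Hqs Hrs _]].
have Hvpq : (v == p) || (v == q).
  by move: Hlt; rewrite !mmE (eq_sym p v) (eq_sym q v); case: (v == p); case: (v == q).
have below : forall x, x \in VP P -> x != p -> x != q -> (mm r s x != 0)%N -> ltP x v.
  move=> x Hx Hxp Hxq Hnz.
  have Hxv : x != v by case/orP: Hvpq => /eqP ->.
  case/orP: (Htot _ _ Hx Hv Hxv) => // Hvx.
  move: (Heq _ Hx Hvx) Hnz; rewrite !mmE (eq_sym p x) (eq_sym q x) (negbTE Hxp) (negbTE Hxq).
  by move=> ->.
have Hrv : ltP r v.
  by apply: below => //; rewrite ?(eq_sym r) // mmE eqxx.
have Hsv : ltP s v.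
  by apply: below => //; rewrite ?(eq_sym s) // mmE eqxx addn1.
by case/orP: Hvpq => /eqP E; subst v; rewrite Hrv Hsv ?orbT.
Qed.

Lemma orl_eq (x y : vertex) : (x == x) || (x == y).
Proof. by rewrite eqxx. Qed.
Lemma orr_eq (x y : vertex) : (y == x) || (y == y).
Proof. by rewrite eqxx orbT. Qed.

Lemma lex2_bwd P (ltP : rel vertex) p q r s : P_order P ltP ->
  uniq [:: p; q; r; s] -> p \in VP P -> q \in VP P -> r \in VP P -> s \in VP P ->
  (ltP r p && ltP s p) || (ltP r q && ltP s q) -> lex_lt P ltP (mm r s) (mm p q).
Proof.
move=> [Hirr Htr Htot] /= Hu Hp Hq Hr Hs.
move: Hu; rewrite !in_cons !in_nil !orbF !negb_or -!andbA => /and5P[Hpq Hpr Hps Hqr /and3P[Hqs Hrs _]].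
have asym : forall x y, x \in VP P -> y \in VP P -> ltP x y -> ~~ ltP y x.
  move=> x y Hx Hy Hxy; apply/negP => Hyx; move: (Hirr _ Hx).
  by rewrite (Htr _ _ _ Hx Hy Hx Hxy Hyx).
have gen : forall v, v \in VP P -> (v == p) || (v == q) ->
    ltP r v -> ltP s v -> (forall y, y \in VP P -> (y == p) || (y == q) -> ~~ ltP v y) ->
    lex_lt P ltP (mm r s) (mm p q).
  move=> v Hv Hvpq Hrv Hsv Hmax; apply: (lex_intro Hv).
    rewrite !mmE.
    have -> : (r == v) = false by apply/negP => /eqP E; rewrite E (negbTE (Hirr _ Hv)) in Hrv.
    have -> : (s == v) = false by apply/negP => /eqP E; rewrite E (negbTE (Hirr _ Hv)) in Hsv.
    by case/orP: Hvpq => /eqP E; rewrite -E eqxx ?addn1.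
  move=> w Hw Hvw; rewrite !mmE.
  have -> : (r == w) = false.
    by apply/negP => /eqP E; rewrite -E (negbTE (asym _ _ Hr Hv Hrv)) in Hvw.
  have -> : (s == w) = false.
    by apply/negP => /eqP E; rewrite -E (negbTE (asym _ _ Hs Hv Hsv)) in Hvw.
  have -> : (p == w) = false.
    by apply/negP => /eqP E; rewrite -E (negbTE (Hmax _ Hp (orl_eq p q))) in Hvw.
  have -> : (q == w) = false.
    by apply/negP => /eqP E; rewrite -E (negbTE (Hmax _ Hq (orr_eq p q))) in Hvw.
  by [].
case/orP => /andP[H1 H2].
- case Hpq': (ltP p q).
  + apply: (gen q) => //; rewrite ?eqxx ?orbT //; try exact: Htr Hpq'.
    move=> y Hy /orP[/eqP ->|/eqP ->]; [exact: asym| exact: Hirr].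
  + apply: (gen p) => //; rewrite ?eqxx //.
    by move=> y Hy /orP[/eqP ->|/eqP ->]; [exact: Hirr| rewrite Hpq'].
- case Hqp': (ltP q p).
  + apply: (gen p) => //; rewrite ?eqxx //; try exact: Htr Hqp'.
    move=> y Hy /orP[/eqP ->|/eqP ->]; [exact: Hirr| exact: asym].
  + apply: (gen q) => //; rewrite ?eqxx ?orbT //.
    by move=> y Hy /orP[/eqP ->|/eqP ->]; [rewrite Hqp'| exact: Hirr].
Qed.

Lemma minor_sok P K a b : inner_interval P a b ->
  forall m, m \in msupp (minor2 K a b) -> sok P m.
Proof.
move=> HI m; rewrite minor2E => /supp2 [->|->]; apply: sok_mm;
  case: a b HI => [a1 a2] [b1 b2] HI; apply: (inV HI) => /=; case: HI => /= H1 H2 _; lia.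
Qed.

Lemma minor_nz P K a b : inner_interval P a b -> minor2 K a b != 0.
Proof.
case: a b => [a1 a2] [b1 b2] [/= H1 H2 _]; rewrite minor2E.
have Hne : mm (a1, a2) (b1, b2) != mm (a1, b2) (b1, a2) by apply: mm_neq; rewrite xpair_eqE; lia.
by apply/eqP => E; move: (supp2p K Hne); rewrite E msupp0 in_fset0.
Qed.

Lemma key P (ltP : rel vertex) K (S : polyS K) M : P_order P ltP ->
  is_lead P ltP S M -> reduces_to_zero P ltP S ->
  exists a' b' w, inner_interval P a' b' /\ M = mulcm w (lead_mon P ltP (minor2 K a' b')).
Proof.
move=> HP [HM HMmax] [n [h [g [Hg Hh HS Hstd]]]].
have HlS : lead_mon P ltP S = M by apply: lead_eq.
have [i Hi] : exists i, (h i * g i)@_M != 0.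
  case: (pickP (fun i => (h i * g i)@_M != 0)) => [i Hi|H0]; first by exists i.
  exfalso; move: HM; rewrite -mcoeff_neq0 HS raddf_sum big1 ?eqxx // => i _.
  by move/negbFE/eqP: (H0 i).
have Hhg : h i * g i != 0 by apply/eqP => E; move: Hi; rewrite E mcoeff0 eqxx.
have Hhi : h i != 0 by apply/eqP => E; move: Hhg; rewrite E mul0r eqxx.
have Hgi : g i != 0 by apply/eqP => E; move: Hhg; rewrite E mulr0 eqxx.
case: (Hg i) => a' [b' [HI Eg]].
have Sg : forall m, m \in msupp (g i) -> sok P m by rewrite Eg; apply: minor_sok.
have Sh : forall m, m \in msupp (h i) -> sok P m by apply: (Hh i).
have Hl := lead_mul HP Hhi Hgi Sh Sg.
have El := lead_eq HP Hl.
exists a', b', (lead_mon P ltP (h i)); split => //; rewrite -Eg.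
case: Hl => _ /(_ M); rewrite -mcoeff_neq0 => /(_ Hi) /orP[/eqP //|L1].
move: (Hstd i Hhg); rewrite El HlS => /orP[/eqP E|L2].
  by rewrite E (negbTE (lex_irr _ _ _)) in L1.
by move: (lex_asym HP L1); rewrite L2.
Qed.

Local Close Scope fset_scope.



Lemma lcm_monE (u w : monom) v : lcm_mon u w v = maxn (u v) (w v).
Proof.
by rewrite /lcm_mon cmE fsfun_fun in_fsetE; case: (finsuppP u); case: (finsuppP w).
Qed.

Lemma mon3 K x y z : mon K (mulcm (mulcm (ucm x) (ucm y)) (ucm z)) = var K x * var K y * var K z.
Proof. by rewrite /mon /var !malgM_def !fgmulUU !mulr1. Qed.

Lemma alg_sp (R : comRingType) (A B C D De Al Be : R) :
  -(De * (A * B - C * D)) - -(D * (Al * Be - C * De)) = D * Al * Be - De * A * B.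
Proof. ring. Qed.

Lemma coef_minor_anti K a b c d : (a.1, b.2) = c -> (b.1, a.2) = d -> mm a b != mm c d ->
  (minor2 K a b)@_(mm c d) = -1.
Proof. by move=> E1 E2 N; rewrite minor2E E1 E2 coef2 (negbTE N) eqxx sub0r. Qed.

Lemma spolyE P (ltP : rel vertex) K (a b c d al be de : vertex) :
  lead_mon P ltP (minor2 K a b) = mm c d ->
  lead_mon P ltP (minor2 K al be) = mm c de ->
  (a.1, b.2) = c -> (b.1, a.2) = d -> (al.1, be.2) = c -> (be.1, al.2) = de ->
  mm a b != mm c d -> mm al be != mm c de -> d != de ->
  spoly P ltP (minor2 K a b) (minor2 K al be) =
    mon K (mulcm (mulcm (ucm d) (ucm al)) (ucm be)) - mon K (mulcm (mulcm (ucm de) (ucm a)) (ucm b)).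
Proof.
move=> L1 L2 E1 E2 E3 E4 N1 N2 N3.
have C1 : Defs.lead_coef P ltP (minor2 K a b) = -1.
  by rewrite /Defs.lead_coef L1; exact: coef_minor_anti.
have C2 : Defs.lead_coef P ltP (minor2 K al be) = -1.
  by rewrite /Defs.lead_coef L2; exact: coef_minor_anti.
have El1 : divcm (lcm_mon (mm c d) (mm c de)) (mm c d) = ucm de.
  apply/eqP/cmP => v; rewrite divcmE lcm_monE !mmE ucmE.
  have : ~~ ((d == v) && (de == v)) by apply/negP => /andP[/eqP E /eqP E']; move: N3; rewrite E E' eqxx.
  by case: (c == v); case: (d == v); case: (de == v).
have El2 : divcm (lcm_mon (mm c d) (mm c de)) (mm c de) = ucm d.
  apply/eqP/cmP => v; rewrite divcmE lcm_monE !mmE ucmE.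
  have : ~~ ((d == v) && (de == v)) by apply/negP => /andP[/eqP E /eqP E']; move: N3; rewrite E E' eqxx.
  by case: (c == v); case: (d == v); case: (de == v).
rewrite /spoly.
erewrite L1, L2.
erewrite C1, C2.
erewrite El1, El2.
erewrite invrN1.
rewrite [X in X - _]scaleN1r [X in _ - X]scaleN1r.
rewrite /minor2.
erewrite E1, E2, E3, E4.
erewrite !mon3.
exact: alg_sp.
Qed.

Lemma sub_inner P (a b a' b' : vertex) : inner_interval P a b ->
  a.1 <= a'.1 -> a'.1 < b'.1 -> b'.1 <= b.1 ->
  a.2 <= a'.2 -> a'.2 < b'.2 -> b'.2 <= b.2 -> inner_interval P a' b'.
Proof.
move=> [H1 H2 HI] h1 h2 h3 h4 h5 h6; split => // v v1 v2 v3 v4.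
apply: HI; lia.
Qed.

Lemma div3 (w : monom) u v x y z : mulcm w (mm u v) = mulcm (mulcm (ucm x) (ucm y)) (ucm z) ->
  uniq [:: x; y; z] -> [/\ u \in [:: x; y; z], v \in [:: x; y; z] & u != v].
Proof.
move=> E Hu.
have Ev : forall t, (w t + ((u == t) + (v == t)) = (x == t) + (y == t) + (z == t))%N.
  by move=> t; move/(congr1 (fun m : monom => m t)): E; rewrite !mulcmE !ucmE.
move: Hu => /= /and3P[Hx Hyz _]; rewrite !in_cons !in_nil !orbF !negb_or in Hx Hyz.
case/andP: Hx => Hxy Hxz.
have mem : forall t, ((u == t) || (v == t)) -> t \in [:: x; y; z].
  move=> t Ht; move: (Ev t); rewrite !in_cons !in_nil orbF.
  rewrite (eq_sym t x) (eq_sym t y) (eq_sym t z).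
  move: Ht; case: (u == t); case: (v == t); case: (x == t); case: (y == t); case: (z == t) => //=; lia.
split; [apply: (mem u); rewrite eqxx // | apply: (mem v); rewrite eqxx orbT //|].
apply/eqP => Euv; move: (Ev u); rewrite Euv eqxx.
case: (eqVneq x v) => [Ex|Nx]; try subst x; case: (eqVneq y v) => [Ey|Ny]; try subst y;
  case: (eqVneq z v) => [Ez|Nz]; try subst z;
  first [ (move=> /=; lia) | by rewrite ?eqxx in Hxy Hxz Hyz ].
Qed.

Lemma coprime_mm p q r s : p != r -> p != s -> q != r -> q != s -> coprime_mon (mm p q) (mm r s).
Proof.
move=> H1 H2 H3 H4 t; rewrite !mmE.
case: (eqVneq p t) => [<-|Hp]; first by right; rewrite (eq_sym r p) (eq_sym s p) (negbTE H1) (negbTE H2).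
case: (eqVneq q t) => [<-|Hq]; first by right; rewrite (eq_sym r q) (eq_sym s q) (negbTE H3) (negbTE H4).
by left.
Qed.

Lemma lead_in P (ltP : rel vertex) K a b : P_order P ltP -> inner_interval P a b ->
  lead_mon P ltP (minor2 K a b) = mm a b \/ lead_mon P ltP (minor2 K a b) = mm (a.1, b.2) (b.1, a.2).
Proof.
move=> HP HI; case: (lead_is HP (@minor_nz P K a b HI) (@minor_sok P K a b HI)) => H _.
by move: H; rewrite minor2E => /supp2.
Qed.

Lemma mm_ne_anti P (a b : vertex) : inner_interval P a b -> mm a b != mm (a.1, b.2) (b.1, a.2).
Proof. case: a b => [a1 a2] [b1 b2] [/= H1 H2 _]; apply: mm_neq; rewrite xpair_eqE; lia. Qed.

Lemma lead_diag P (ltP : rel vertex) K a b : P_order P ltP -> inner_interval P a b ->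
  lead_mon P ltP (minor2 K a b) = mm a b -> lex_lt P ltP (mm (a.1, b.2) (b.1, a.2)) (mm a b).
Proof.
move=> HP HI E; case: (lead_is HP (@minor_nz P K a b HI) (@minor_sok P K a b HI)) => _ Hmax.
have N := mm_ne_anti HI.
move: (Hmax (mm (a.1, b.2) (b.1, a.2))); rewrite E minor2E => /(_ (supp2q K N)).
by rewrite eq_sym (negbTE N).
Qed.

Lemma lead_anti P (ltP : rel vertex) K a b : P_order P ltP -> inner_interval P a b ->
  lead_mon P ltP (minor2 K a b) = mm (a.1, b.2) (b.1, a.2) -> lex_lt P ltP (mm a b) (mm (a.1, b.2) (b.1, a.2)).
Proof.
move=> HP HI E; case: (lead_is HP (@minor_nz P K a b HI) (@minor_sok P K a b HI)) => _ Hmax.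
have N := mm_ne_anti HI.
move: (Hmax (mm a b)); rewrite E minor2E => /(_ (supp2p K N)).
by rewrite (negbTE N).
Qed.

Lemma supp_negvar K x m : m \in msupp (- var K x) -> m = ucm x.
Proof.
rewrite -mcoeff_neq0 mcoeffN oppr_eq0 -[var K x]/(mon K (ucm x)) coefU.
by case: (eqVneq (ucm x) m) => [->//|_]; rewrite mulr0n eqxx.
Qed.

Lemma supp_hg K x a b m : m \in msupp ((- var K x) * minor2 K a b) ->
  m = mulcm (ucm x) (mm (a.1, b.2) (b.1, a.2)) \/ m = mulcm (ucm x) (mm a b).
Proof.
move/msuppM_le => [k1 [k2 [H1 H2 ->]]]; rewrite (supp_negvar H1).
by move: H2; rewrite minor2E => /supp2 [->|->]; [right|left].
Qed.

Lemma std_one P (ltP : rel vertex) K (x a b : vertex) M : P_order P ltP ->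
  inner_interval P a b -> x \in VP P ->
  (forall m, m \in msupp ((- var K x) * minor2 K a b) -> (m == M) || lex_lt P ltP m M) ->
  (- var K x) * minor2 K a b != 0 ->
  (lead_mon P ltP ((- var K x) * minor2 K a b) == M) ||
    lex_lt P ltP (lead_mon P ltP ((- var K x) * minor2 K a b)) M.
Proof.
move=> HP HI Hx H Hnz; apply: H.
have Hs : forall m, m \in msupp ((- var K x) * minor2 K a b) -> sok P m.
  move=> m /msuppM_le [k1 [k2 [H1 H2 ->]]]; rewrite (supp_negvar H1).
  by apply: sok_mul; [exact: sok_u | exact: (minor_sok HI H2)].
by case: (lead_is HP Hnz Hs).
Qed.

Lemma build2 P (ltP : rel vertex) K (S : polyS K) M x0 x1 a0 b0 a1 b1 :
  P_order P ltP -> inner_interval P a0 b0 -> inner_interval P a1 b1 ->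
  x0 \in VP P -> x1 \in VP P ->
  S = (- var K x0) * minor2 K a0 b0 + (- var K x1) * minor2 K a1 b1 ->
  lead_mon P ltP S = M ->
  (forall m, m \in msupp ((- var K x0) * minor2 K a0 b0) -> (m == M) || lex_lt P ltP m M) ->
  (forall m, m \in msupp ((- var K x1) * minor2 K a1 b1) -> (m == M) || lex_lt P ltP m M) ->
  reduces_to_zero P ltP S.
Proof.
move=> HP HI0 HI1 Hx0 Hx1 ES EM H0 H1.
exists 2%N, (fun i : 'I_2 => if val i == 0%N then - var K x0 else - var K x1),
 (fun i : 'I_2 => if val i == 0%N then minor2 K a0 b0 else minor2 K a1 b1).
split.
- by case=> [[|[|//]]] _ /=; [exists a0, b0 | exists a1, b1].
- by case=> [[|[|//]]] _ /= m /supp_negvar ->; exact: sok_u.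
- by rewrite big_ord_recl big_ord1 /=.
- erewrite EM.
  by case=> [[|[|//]]] _ /= Hnz; apply: std_one.
Qed.



Lemma alg_E1 (R : comRingType) (A B D De Al Be H : R) :
  D * Al * Be - De * A * B = (- B) * (A * De - Al * H) + (- Al) * (H * B - Be * D).
Proof. ring. Qed.
Lemma alg_E2 (R : comRingType) (A B D De Al Be Rr : R) :
  D * Al * Be - De * A * B = (- A) * (De * B - Be * Rr) + (- Be) * (A * Rr - Al * D).
Proof. ring. Qed.

Lemma swapc (A B C D : bool) : (A && B) || (C && D) -> (B && A) || (D && C).
Proof. by case: A; case: B; case: C; case: D. Qed.
Lemma swapo (A B : bool) : A || B -> B || A.
Proof. by case: A; case: B. Qed.

Lemma lex2_fwdU P (ltP : rel vertex) p q r s : lex_lt P ltP (mm r s) (mm p q) -> P_order P ltP ->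
  uniq [:: p; q; r; s] -> p \in VP P -> q \in VP P -> r \in VP P -> s \in VP P ->
  (ltP r p && ltP s p) || (ltP r q && ltP s q).
Proof. by move=> L HP U Hp Hq Hr Hs; apply: (lex2_fwd HP U). Qed.

Lemma le_eq P (ltP : rel vertex) (X M : monom) : X = M -> (X == M) || lex_lt P ltP X M.
Proof. by move=> ->; rewrite eqxx. Qed.
Lemma le_lt P (ltP : rel vertex) (X M : monom) : lex_lt P ltP X M -> (X == M) || lex_lt P ltP X M.
Proof. by move=> ->; rewrite orbT. Qed.
Lemma lex_congr P (ltP : rel vertex) (X Y X' Y' : monom) : X = X' -> Y = Y' ->
  lex_lt P ltP X' Y' -> lex_lt P ltP X Y.
Proof. by move=> -> ->. Qed.

Lemma supp_ok P (ltP : rel vertex) K x a b M :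
  (mulcm (ucm x) (mm (a.1, b.2) (b.1, a.2)) == M) || lex_lt P ltP (mulcm (ucm x) (mm (a.1, b.2) (b.1, a.2))) M ->
  (mulcm (ucm x) (mm a b) == M) || lex_lt P ltP (mulcm (ucm x) (mm a b)) M ->
  forall m, m \in msupp ((- var K x) * minor2 K a b) -> (m == M) || lex_lt P ltP m M.
Proof. by move=> H1 H2 m /supp_hg [->|->]. Qed.

Ltac vside HI := apply: (inV HI); rewrite /=; lia.
Ltac uside := rewrite /= ?in_cons ?in_nil ?orbF ?negb_or ?xpair_eqE; lia.
Ltac meq := apply/eqP/cmP => ?; rewrite /= /mm !mulcmE; ring.
Ltac fin Hc := solve [ case/orP: Hc => /andP[-> ->]; rewrite ?orbT // ].
Ltac lexvia X' Y' HP HI Hc H1 H2 H3 H4 := apply: le_lt; apply: (lex_congr (X' := X') (Y' := Y'));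
  [meq|meq| apply: lex_mull; apply: (lex2_bwd HP);
    [clear -H1 H2 H3 H4; uside|clear -HI H1 H2 H3 H4; vside HI|clear -HI H1 H2 H3 H4; vside HI
    |clear -HI H1 H2 H3 H4; vside HI|clear -HI H1 H2 H3 H4; vside HI|fin Hc]].
Ltac lexhyp L := apply: le_lt; apply: (lex_congr _ erefl L); meq.

Theorem mainTheorem5 (K : fieldType) (P : {fset vertex}) (ltP : rel vertex)
    (i j k l m n : int) :
  P != fset0 ->
  i < m < k -> j < n < l ->
  inner_interval P (i, j) (k, l) ->
  P_order P ltP ->
  let a : vertex := (i, j) in
  let b : vertex := (k, l) in
  let delta : vertex := (m, n) in
  let alpha : vertex := (i, n) in
  let beta : vertex := (m, l) in
  let d : vertex := (k, j) in
  let h : vertex := (m, j) in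
  let r : vertex := (k, n) in
  let fab : polyS K := minor2 K a b in
  let fal : polyS K := minor2 K alpha beta in
  ~ coprime_mon (lead_mon P ltP fab) (lead_mon P ltP fal) ->
  let mon1 : monom := mulcm (mulcm (ucm d) (ucm alpha)) (ucm beta) in
  let mon2 : monom := mulcm (mulcm (ucm delta) (ucm a)) (ucm b) in
  reduces_to_zero P ltP (spoly P ltP fab fal) <->
  [\/ lex_lt P ltP mon1 mon2 /\
        ((ltP h a && ltP alpha a) || (ltP h delta && ltP alpha delta)),
      lex_lt P ltP mon1 mon2 /\
        ((ltP r delta && ltP beta delta) || (ltP r b && ltP beta b)),
      lex_lt P ltP mon2 mon1 /\
        ((ltP r alpha && ltP a alpha) || (ltP r d && ltP a d))
    | lex_lt P ltP mon2 mon1 /\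
        ((ltP h d && ltP b d) || (ltP h beta && ltP b beta))].
Proof.
move=> HP0 /andP[Him Hmk] /andP[Hjn Hnl] HI HP.
cbv zeta => Hnc.
have HIal : inner_interval P (i, n) (m, l) by apply: (sub_inner HI) => /=; lia.
have [Lab|Lab] := lead_in K HP HI; have [Lal|Lal] := lead_in K HP HIal.
- exfalso; apply: Hnc; erewrite Lab, Lal; apply: coprime_mm; rewrite /= xpair_eqE; lia.
- exfalso; apply: Hnc; erewrite Lab, Lal; apply: coprime_mm; rewrite /= xpair_eqE; lia.
- exfalso; apply: Hnc; erewrite Lab, Lal; apply: coprime_mm; rewrite /= xpair_eqE; lia.
move=> {Hnc}.
have ES := spolyE Lab Lal erefl erefl erefl erefl (mm_ne_anti HI) (mm_ne_anti HIal)
  ltac:(rewrite /= xpair_eqE; lia).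
erewrite ES.

have VV : forall x y, i <= x <= k -> j <= y <= l -> (x, y) \in VP P.
  by move=> x y Hx Hy; apply: (inV HI).
have S1 : sok P (mulcm (mulcm (ucm (k, j)) (ucm (i, n))) (ucm (m, l))).
  by apply: sok_mul; [apply: sok_mul|]; apply: sok_u; apply: VV; lia.
have S2 : sok P (mulcm (mulcm (ucm (m, n)) (ucm (i, j))) (ucm (k, l))).
  by apply: sok_mul; [apply: sok_mul|]; apply: sok_u; apply: VV; lia.
have N12 : mulcm (mulcm (ucm (k, j)) (ucm (i, n))) (ucm (m, l)) !=
           mulcm (mulcm (ucm (m, n)) (ucm (i, j))) (ucm (k, l)).
  apply/negP => /eqP /(congr1 (fun mo : monom => mo (k, j))).
  rewrite !mulcmE !ucmE !xpair_eqE !eqxx /=.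
  have -> : (i == k) = false by lia.
  have -> : (m == k) = false by lia.
  have -> : (l == j) = false by lia.
  by [].
have lead12 : lex_lt P ltP (mulcm (mulcm (ucm (k, j)) (ucm (i, n))) (ucm (m, l)))
                 (mulcm (mulcm (ucm (m, n)) (ucm (i, j))) (ucm (k, l))) ->
  is_lead P ltP (mon K (mulcm (mulcm (ucm (k, j)) (ucm (i, n))) (ucm (m, l))) -
                 mon K (mulcm (mulcm (ucm (m, n)) (ucm (i, j))) (ucm (k, l))))
               (mulcm (mulcm (ucm (m, n)) (ucm (i, j))) (ucm (k, l))).
  move=> L; split; first exact: supp2q.
  by move=> m' /supp2 [->|->]; rewrite ?L ?orbT ?eqxx.
have lead21 : lex_lt P ltP (mulcm (mulcm (ucm (m, n)) (ucm (i, j))) (ucm (k, l)))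
                 (mulcm (mulcm (ucm (k, j)) (ucm (i, n))) (ucm (m, l))) ->
  is_lead P ltP (mon K (mulcm (mulcm (ucm (k, j)) (ucm (i, n))) (ucm (m, l))) -
                 mon K (mulcm (mulcm (ucm (m, n)) (ucm (i, j))) (ucm (k, l))))
               (mulcm (mulcm (ucm (k, j)) (ucm (i, n))) (ucm (m, l))).
  move=> L; split; first exact: supp2p.
  by move=> m' /supp2 [->|->]; rewrite ?L ?orbT ?eqxx.
split.
- move=> Hred; case/orP: (lex_total HP S1 S2 N12) => L.
  + have [[a1 a2] [[b1 b2] [w [HI' EM]]]] := key HP (lead12 L) Hred.
    have [h1 h2 _] := HI'; rewrite /= in h1 h2.
    have [Lg|Lg] := lead_in K HP HI'; erewrite Lg in EM;
      have [Hu Hv Huv] := div3 (esym EM) ltac:(uside);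
      rewrite !in_cons !in_nil !orbF !xpair_eqE /= in Hu Hv;
      rewrite /= xpair_eqE in Huv.
    * case/or3P: Hu => /andP[/eqP ? /eqP ?]; subst a1 a2;
        case/or3P: Hv => /andP[/eqP ? /eqP ?]; subst b1 b2; try (exfalso; lia).
      -- (apply: Or42; split => //;
          move: (lex2_fwdU (lead_diag HP HI' Lg) HP) => Himp;
          have Hc := Himp ltac:(clear -Him Hmk Hjn Hnl; uside) ltac:(clear -Him Hmk Hjn Hnl HI; vside HI)
            ltac:(clear -Him Hmk Hjn Hnl HI; vside HI) ltac:(clear -Him Hmk Hjn Hnl HI; vside HI)
            ltac:(clear -Him Hmk Hjn Hnl HI; vside HI); rewrite /= in Hc;
          fin Hc).
      -- (apply: Or41; split => //;
          move: (lex2_fwdU (lead_diag HP HI' Lg) HP) => Himp;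
          have Hc := Himp ltac:(clear -Him Hmk Hjn Hnl; uside) ltac:(clear -Him Hmk Hjn Hnl HI; vside HI)
            ltac:(clear -Him Hmk Hjn Hnl HI; vside HI) ltac:(clear -Him Hmk Hjn Hnl HI; vside HI)
            ltac:(clear -Him Hmk Hjn Hnl HI; vside HI); rewrite /= in Hc;
          fin Hc).
      -- exfalso; case/negP: (mm_ne_anti HI); apply/eqP; exact: (etrans (esym Lg) Lab).
    * case/or3P: Hu => /andP[/eqP ? /eqP ?]; subst a1 b2;
        case/or3P: Hv => /andP[/eqP ? /eqP ?]; subst b1 a2; exfalso; lia.
  + have [[a1 a2] [[b1 b2] [w [HI' EM]]]] := key HP (lead21 L) Hred.
    have [h1 h2 _] := HI'; rewrite /= in h1 h2.
    have [Lg|Lg] := lead_in K HP HI'; erewrite Lg in EM;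
      have [Hu Hv Huv] := div3 (esym EM) ltac:(uside);
      rewrite !in_cons !in_nil !orbF !xpair_eqE /= in Hu Hv;
      rewrite /= xpair_eqE in Huv.
    * case/or3P: Hu => /andP[/eqP ? /eqP ?]; subst a1 a2;
        case/or3P: Hv => /andP[/eqP ? /eqP ?]; subst b1 b2; try (exfalso; lia).
      exfalso; case/negP: (mm_ne_anti HIal); apply/eqP; exact: (etrans (esym Lg) Lal).
    * case/or3P: Hu => /andP[/eqP ? /eqP ?]; subst a1 b2;
        case/or3P: Hv => /andP[/eqP ? /eqP ?]; subst b1 a2; try (exfalso; lia).
      -- (apply: Or43; split => //;
          move: (lex2_fwdU (lead_anti HP HI' Lg) HP) => Himp;
          have Hc := Himp ltac:(clear -Him Hmk Hjn Hnl; uside) ltac:(clear -Him Hmk Hjn Hnl HI; vside HI)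
            ltac:(clear -Him Hmk Hjn Hnl HI; vside HI) ltac:(clear -Him Hmk Hjn Hnl HI; vside HI)
            ltac:(clear -Him Hmk Hjn Hnl HI; vside HI); rewrite /= in Hc;
          fin Hc).
      -- (apply: Or44; split => //;
          move: (lex2_fwdU (lead_anti HP HI' Lg) HP) => Himp;
          have Hc := Himp ltac:(clear -Him Hmk Hjn Hnl; uside) ltac:(clear -Him Hmk Hjn Hnl HI; vside HI)
            ltac:(clear -Him Hmk Hjn Hnl HI; vside HI) ltac:(clear -Him Hmk Hjn Hnl HI; vside HI)
            ltac:(clear -Him Hmk Hjn Hnl HI; vside HI); rewrite /= in Hc;
          fin Hc).
- case=> [[L Hc]|[L Hc]|[L Hc]|[L Hc]].
  + apply: (@build2 P ltP K _ _ (k, l) (i, n) (i, j) (m, n) (m, j) (k, l) HP);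
      [ by apply: (sub_inner HI) => /=; lia | by apply: (sub_inner HI) => /=; lia
      | by apply: VV; lia | by apply: VV; lia
      | by rewrite /minor2; erewrite !mon3; exact: alg_E1
      | exact: (lead_eq HP (lead12 L)) | apply: supp_ok | apply: supp_ok ].
    * lexvia (mulcm (ucm (k, l)) (mm (i, n) (m, j))) (mulcm (ucm (k, l)) (mm (i, j) (m, n))) HP HI Hc Him Hmk Hjn Hnl.
    * by apply: le_eq; meq.
    * by lexhyp L.
    * lexvia (mulcm (ucm (k, l)) (mm (i, n) (m, j))) (mulcm (ucm (k, l)) (mm (i, j) (m, n))) HP HI Hc Him Hmk Hjn Hnl.
  + apply: (@build2 P ltP K _ _ (i, j) (m, l) (m, n) (k, l) (i, j) (k, n) HP);
      [ by apply: (sub_inner HI) => /=; lia | by apply: (sub_inner HI) => /=; lia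
      | by apply: VV; lia | by apply: VV; lia
      | by rewrite /minor2; erewrite !mon3; exact: alg_E2
      | exact: (lead_eq HP (lead12 L)) | apply: supp_ok | apply: supp_ok ].
    * lexvia (mulcm (ucm (i, j)) (mm (m, l) (k, n))) (mulcm (ucm (i, j)) (mm (m, n) (k, l))) HP HI Hc Him Hmk Hjn Hnl.
    * by apply: le_eq; meq.
    * by lexhyp L.
    * lexvia (mulcm (ucm (i, j)) (mm (m, l) (k, n))) (mulcm (ucm (i, j)) (mm (m, n) (k, l))) HP HI Hc Him Hmk Hjn Hnl.
  + apply: (@build2 P ltP K _ _ (i, j) (m, l) (m, n) (k, l) (i, j) (k, n) HP);
      [ by apply: (sub_inner HI) => /=; lia | by apply: (sub_inner HI) => /=; lia
      | by apply: VV; lia | by apply: VV; lia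
      | by rewrite /minor2; erewrite !mon3; exact: alg_E2
      | exact: (lead_eq HP (lead21 L)) | apply: supp_ok | apply: supp_ok ].
    * lexvia (mulcm (ucm (m, l)) (mm (i, j) (k, n))) (mulcm (ucm (m, l)) (mm (i, n) (k, j))) HP HI Hc Him Hmk Hjn Hnl.
    * by lexhyp L.
    * by apply: le_eq; meq.
    * lexvia (mulcm (ucm (m, l)) (mm (i, j) (k, n))) (mulcm (ucm (m, l)) (mm (i, n) (k, j))) HP HI Hc Him Hmk Hjn Hnl.
  + apply: (@build2 P ltP K _ _ (k, l) (i, n) (i, j) (m, n) (m, j) (k, l) HP);
      [ by apply: (sub_inner HI) => /=; lia | by apply: (sub_inner HI) => /=; lia
      | by apply: VV; lia | by apply: VV; lia
      | by rewrite /minor2; erewrite !mon3; exact: alg_E1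
      | exact: (lead_eq HP (lead21 L)) | apply: supp_ok | apply: supp_ok ].
    * lexvia (mulcm (ucm (i, n)) (mm (m, j) (k, l))) (mulcm (ucm (i, n)) (mm (m, l) (k, j))) HP HI Hc Him Hmk Hjn Hnl.
    * by lexhyp L.
    * by apply: le_eq; meq.
    * lexvia (mulcm (ucm (i, n)) (mm (m, j) (k, l))) (mulcm (ucm (i, n)) (mm (m, l) (k, j))) HP HI Hc Him Hmk Hjn Hnl.
Qed.
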